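(* Let $\vec n\in\mathbb{R}^9$ with $\sum_i n(i)=0$ and $\sum_i n(i)^2=1$, and for $r\ge0$ let $\rho_r=\sum_i[4p_r(i)-\frac13]\Pi_i$ with $p_r(i)=\frac19+r\,n(i)$. The set of $r\ge0$ for which $\rho_r$ is a density operator is an interval $[0,r(\vec n)]$, where $r(\vec n)$ is the smallest positive root of $4r^3F(\vec n)-r^2+\frac1{54}=0$. In particular $r(\vec n)=\frac1{3\sqrt6}$ when $F(\vec n)=0$, $r(\vec n)=\frac1{3\sqrt2}$ when $F(\vec n)=\frac1{\sqrt2}$, $r(\vec n)=\frac1{6\sqrt2}$ when $F(\vec n)=-\frac1{\sqrt2}$, and for all such $\vec n$, $$\frac1{6\sqrt2}\le r(\vec n)\le\frac1{3\sqrt2}.$$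
   Context: Let $\omega=e^{2\pi i/3}$, standard basis $|0\rangle,|1\rangle,|2\rangle$ of $\mathbb{C}^3$, $X|j\rangle=|j+1\bmod 3\rangle$, $Z|j\rangle=\omega^j|j\rangle$, $|\psi_0\rangle=\frac1{\sqrt2}(0,1,-1)^T$; for $m,n\in\{0,1,2\}$ and $i=3m+n+1$, $\Pi_i$ is the projector onto $X^mZ^n|\psi_0\rangle$ (the canonical Hesse SIC), so $p_r(i)=\frac13\operatorname{Tr}(\rho_r\Pi_i)$. Identify index $i=3m+n+1$ with $(m,n)\in\mathbb{Z}_3^2$; the 12 affine lines are $\{1,2,3\},\{4,5,6\},\{7,8,9\},\{1,4,7\},\{2,5,8\},\{3,6,9\},\{1,5,9\},\{2,6,7\},\{3,4,8\},\{1,6,8\},\{2,4,9\},\{3,5,7\}$, and $Q$ is the set of ordered triples $(i,j,k)$ of pairwise distinct indices with $\{i,j,k\}$ a line. For $v\in\mathbb{R}^9$ define $F(v)=\sum_i v(i)^3-\frac12\sum_{(i,j,k)\in Q}v(i)v(j)v(k)$. *)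

(* Defs.v *)
(* Complex scalars: an arbitrary numClosedFieldType C
   (an algebraically closed field with conjugation and order, e.g. C);
   "real numbers" are the elements x with x \is Num.real. *)
From HB Require Import structures.
From mathcomp Require Import all_boot all_order all_algebra.
Set Implicit Arguments. Unset Strict Implicit. Unset Printing Implicit Defensive.
Import Order.TTheory GRing.Theory Num.Theory.
Local Open Scope ring_scope.

Section Hesse.
Variable C : numClosedFieldType.

(* omega = e^{2 pi i / 3} = (-1 + i sqrt 3)/2 *)
Definition omega : C := (-1 + 'i * sqrtC 3) / 2%:R.

Definition ctr m n (A : 'M[C]_(m, n)) : 'M[C]_(n, m) := map_mx (fun x => x^*) A^T.

Definition shiftX : 'M[C]_3 :=
  \matrix_(a < 3, b < 3) ((nat_of_ord a == (b.+1 %% 3)%N)%:R).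
Definition clockZ : 'M[C]_3 :=
  \matrix_(a < 3, b < 3) ((a == b)%:R * omega ^+ a).

Definition psi0 : 'cV[C]_3 :=
  \col_(j < 3) ((if nat_of_ord j == 0%N then 0 else if nat_of_ord j == 1%N then 1 else -1)
                / sqrtC 2%:R).

(* index k : 'I_9 (0-based) corresponds to the paper's i = k+1 = 3m+n+1,
   with m = k %/ 3, n = k %% 3 *)
Definition sic_vec (k : 'I_9) : 'cV[C]_3 :=
  shiftX ^+ (k %/ 3) *m clockZ ^+ (k %% 3) *m psi0.

Definition Pi (k : 'I_9) : 'M[C]_3 := sic_vec k *m ctr (sic_vec k).

(* the 12 affine lines, 0-based indices *)
Definition hesse_lines : seq (seq nat) :=
  [:: [:: 0; 1; 2]%N; [:: 3; 4; 5]%N; [:: 6; 7; 8]%N;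
      [:: 0; 3; 6]%N; [:: 1; 4; 7]%N; [:: 2; 5; 8]%N;
      [:: 0; 4; 8]%N; [:: 1; 5; 6]%N; [:: 2; 3; 7]%N;
      [:: 0; 5; 7]%N; [:: 1; 3; 8]%N; [:: 2; 4; 6]%N].

Definition inQ (i j k : 'I_9) : bool :=
  [&& i != j, j != k, i != k &
      has (fun L => [&& nat_of_ord i \in L, nat_of_ord j \in L & nat_of_ord k \in L])
          hesse_lines].

Definition Fcub (v : 'I_9 -> C) : C :=
  \sum_i v i ^+ 3
  - 2%:R^-1 * \sum_i \sum_j \sum_k (if inQ i j k then v i * v j * v k else 0).

Definition prob (n : 'I_9 -> C) (r : C) (i : 'I_9) : C := 9%:R^-1 + r * n i.

Definition rho (n : 'I_9 -> C) (r : C) : 'M[C]_3 :=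
  \sum_i (4%:R * prob n r i - 3%:R^-1) *: Pi i.

Definition density (A : 'M[C]_3) : Prop :=
  [/\ ctr A = A, \tr A = 1 & forall v : 'cV[C]_3, 0 <= (ctr v *m A *m v) 0 0].

End Hesse.

(* Main.v *)
Require Import Defs.
From HB Require Import structures.
From mathcomp Require Import all_boot all_order all_algebra.
From mathcomp Require Import ring lra.
Set Implicit Arguments. Unset Strict Implicit. Unset Printing Implicit Defensive.
Import Order.TTheory GRing.Theory Num.Theory.
Local Open Scope ring_scope.

Section S.
Variable C : numClosedFieldType.
Local Notation w := (omega C).

Lemma omega2 : w ^+ 2 + w + 1 = 0.
Proof.
rewrite /omega.
have h3 : sqrtC (3%:R : C) ^+ 2 = 3%:R by rewrite sqrtCK.
have hi : ('i : C) ^+ 2 = -1 by rewrite sqrCi.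
have h2 : (2%:R : C) != 0 by rewrite pnatr_eq0.
have -> : ((-1 + 'i * sqrtC 3%:R) / 2%:R) ^+ 2 + (-1 + 'i * sqrtC 3%:R) / 2%:R + 1
   = (('i:C)^+2 * sqrtC 3%:R ^+ 2 + 3%:R) / 4%:R by field.
by rewrite h3 hi mulN1r addNr mul0r.
Qed.

Lemma conj_omega : w^* = -1 - w.
Proof.
rewrite /omega fmorph_div rmorphD rmorphN rmorph1 rmorphM /= conjCi conjC_nat.

rewrite (geC0_conj (x := sqrtC 3%:R)) ?sqrtC_ge0 ?ler0n //.
have h2 : (2%:R : C) != 0 by rewrite pnatr_eq0.
by field.
Qed.

Definition Wv (k a : nat) : C :=
  let m := Nat.div k 3 in let j := Nat.modulo k 3 in let c := Nat.modulo (a + 3 - m) 3 in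
  if c == 0%N then 0 else if c == 1%N then w ^+ j else - w ^+ (2 * j).

Lemma conjwX j : (w ^+ j)^* = (-1 - w) ^+ j.
Proof. elim: j => [|j IH]; first by rewrite !expr0 rmorph1. by rewrite !exprS rmorphM /= IH conj_omega. Qed.

Lemma sum3 (f : 'I_3 -> C) : \sum_i f i = f (@Ordinal 3 0 isT) + f (@Ordinal 3 1 isT) + f (@Ordinal 3 2 isT).
Proof. rewrite !big_ord_recr big_ord0 /= add0r; congr (_ + _ + _); congr f; exact: val_inj. Qed.

Lemma sicE (k : 'I_9) (a : 'I_3) : sic_vec C k a ord0 = Wv k a / sqrtC 2%:R.
Proof.
case: k => k Hk; case: a => a Ha.
rewrite /sic_vec /=.
do 9?[case: k Hk => [|k] Hk]; do 3?[case: a Ha => [|a] Ha] => //=.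
all: rewrite ?expr0 ?expr1 ?expr2 -?mulmxE ?mul1mx ?mulmx1.
all: do 4 (rewrite ?mxE ?sum3 /=).
all: rewrite /Wv /=.
all: ring.
Qed.

Local Notation "'nn' k" := (@Ordinal 9 k isT) (at level 0, k at level 0).

Lemma sum9 (f : 'I_9 -> C) : \sum_i f i = f (nn 0) + f (nn 1) + f (nn 2) + f (nn 3) + f (nn 4) + f (nn 5) + f (nn 6) + f (nn 7) + f (nn 8).
Proof. rewrite !big_ord_recr big_ord0 /= add0r; repeat congr (_ + _); (congr f; exact: val_inj). Qed.

Lemma FcubE (n : 'I_9 -> C) : Fcub n = \sum_i n i ^+ 3 - 3%:R * (
  n (nn 0) * n (nn 1) * n (nn 2) + n (nn 3) * n (nn 4) * n (nn 5) + n (nn 6) * n (nn 7) * n (nn 8) +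
  n (nn 0) * n (nn 3) * n (nn 6) + n (nn 1) * n (nn 4) * n (nn 7) + n (nn 2) * n (nn 5) * n (nn 8) +
  n (nn 0) * n (nn 4) * n (nn 8) + n (nn 1) * n (nn 5) * n (nn 6) + n (nn 2) * n (nn 3) * n (nn 7) +
  n (nn 0) * n (nn 5) * n (nn 7) + n (nn 1) * n (nn 3) * n (nn 8) + n (nn 2) * n (nn 4) * n (nn 6)).
Proof.
rewrite /Fcub; congr (_ - _).
rewrite !sum9.
rewrite /inQ /=.

by field.
Qed.

Lemma wred (L R S G1 G2 a1 a2 : C) : a1 = 0 -> a2 = 0 ->
  L = R + S * (w ^+ 2 + w + 1) + G1 * a1 + G2 * a2 -> L = R.
Proof. by move=> -> ->; rewrite omega2 !mulr0 !addr0. Qed.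

Lemma Pi_entry (k : 'I_9) (a b : 'I_3) : Pi C k a b = Wv k a * (Wv k b)^* / 2%:R.
Proof.
rewrite /Pi mxE big_ord1 /ctr [map_mx _ _ _ _]mxE [trmx _ _ _]mxE !sicE fmorph_div /=.
rewrite (geC0_conj (x := sqrtC 2%:R)) ?sqrtC_ge0 ?ler0n //.
have h2 : sqrtC (2%:R : C) ^+ 2 = 2%:R by rewrite sqrtCK.
have h0 : sqrtC (2%:R : C) != 0 by rewrite sqrtC_eq0 pnatr_eq0.
transitivity (Wv k a * (Wv k b)^* / (sqrtC 2%:R ^+ 2)); last by rewrite h2.
by field.
Qed.

Definition Nm (x : 'I_9 -> C) : 'M[C]_3 := \sum_i x i *: Pi C i.

Definition EeF (x : 'I_9 -> C) (a b : nat) : C :=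
  match a, b with
  | 0, 0 => ((x (nn 8)) + (x (nn 7)) + (x (nn 6)) + (x (nn 5)) + (x (nn 4)) + (x (nn 3)))
  | 0, 1 => (- (x (nn 8))*w + (x (nn 7)) + (x (nn 7))*w - (x (nn 6)))
  | 0, 2 => ((x (nn 5)) + (x (nn 5))*w - (x (nn 4))*w - (x (nn 3)))
  | 1, 0 => ((x (nn 8)) + (x (nn 8))*w - (x (nn 7))*w - (x (nn 6)))
  | 1, 1 => ((x (nn 8)) + (x (nn 7)) + (x (nn 6)) + (x (nn 2)) + (x (nn 1)) + (x (nn 0)))
  | 1, 2 => (- (x (nn 2))*w + (x (nn 1)) + (x (nn 1))*w - (x (nn 0)))
  | 2, 0 => (- (x (nn 5))*w + (x (nn 4)) + (x (nn 4))*w - (x (nn 3)))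
  | 2, 1 => ((x (nn 2)) + (x (nn 2))*w - (x (nn 1))*w - (x (nn 0)))
  | _, _ => ((x (nn 5)) + (x (nn 4)) + (x (nn 3)) + (x (nn 2)) + (x (nn 1)) + (x (nn 0)))
  end.

Definition Ee (x : 'I_9 -> C) : 'M[C]_3 := \matrix_(a < 3, b < 3) EeF x a b.

Lemma NmE (x : 'I_9 -> C) : (2%:R : C) *: Nm x = Ee x.
Proof.
apply/matrixP => a b; rewrite [LHS]mxE summxE sum9 [Ee _ _ _]mxE.
rewrite ![(_ *: Pi C _) _ _]mxE !Pi_entry.
case: a => [[|[|[|a]]] Ha] //; case: b => [[|[|[|b]]] Hb] //.
all: rewrite /Wv /=; rewrite ?rmorphN /= ?conjwX ?rmorph0.
- apply: (wred (S := (- (x (nn 8)) + (x (nn 8))*w + (x (nn 8))*w^+2 - (x (nn 7)) - (x (nn 5)) + (x (nn 5))*w - (x (nn 5))*w^+3 + 2%:R*(x (nn 5))*w^+4 + 3%:R*(x (nn 5))*w^+5 + (x (nn 5))*w^+6 - (x (nn 4)) + (x (nn 4))*w + (x (nn 4))*w^+2)) (G1 := 0) (G2 := 0) (erefl (0:C)) (erefl (0:C))); by field; rewrite ?pnatr_eq0.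
- apply: (wred (S := ((x (nn 8))*w - 2%:R*(x (nn 8))*w^+2 - 3%:R*(x (nn 8))*w^+3 - (x (nn 8))*w^+4 - (x (nn 7)) - (x (nn 7))*w)) (G1 := 0) (G2 := 0) (erefl (0:C)) (erefl (0:C))); by field; rewrite ?pnatr_eq0.
- apply: (wred (S := (- (x (nn 5)) + (x (nn 5))*w^+2 - (x (nn 5))*w^+3 - (x (nn 5))*w^+4 + (x (nn 4))*w)) (G1 := 0) (G2 := 0) (erefl (0:C)) (erefl (0:C))); by field; rewrite ?pnatr_eq0.
- apply: (wred (S := (- (x (nn 8)) + (x (nn 8))*w^+2 - (x (nn 8))*w^+3 - (x (nn 8))*w^+4 + (x (nn 7))*w)) (G1 := 0) (G2 := 0) (erefl (0:C)) (erefl (0:C))); by field; rewrite ?pnatr_eq0.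
- apply: (wred (S := (- (x (nn 8)) + (x (nn 8))*w - (x (nn 8))*w^+3 + 2%:R*(x (nn 8))*w^+4 + 3%:R*(x (nn 8))*w^+5 + (x (nn 8))*w^+6 - (x (nn 7)) + (x (nn 7))*w + (x (nn 7))*w^+2 - (x (nn 2)) + (x (nn 2))*w + (x (nn 2))*w^+2 - (x (nn 1)))) (G1 := 0) (G2 := 0) (erefl (0:C)) (erefl (0:C))); by field; rewrite ?pnatr_eq0.
- apply: (wred (S := ((x (nn 2))*w - 2%:R*(x (nn 2))*w^+2 - 3%:R*(x (nn 2))*w^+3 - (x (nn 2))*w^+4 - (x (nn 1)) - (x (nn 1))*w)) (G1 := 0) (G2 := 0) (erefl (0:C)) (erefl (0:C))); by field; rewrite ?pnatr_eq0.
- apply: (wred (S := ((x (nn 5))*w - 2%:R*(x (nn 5))*w^+2 - 3%:R*(x (nn 5))*w^+3 - (x (nn 5))*w^+4 - (x (nn 4)) - (x (nn 4))*w)) (G1 := 0) (G2 := 0) (erefl (0:C)) (erefl (0:C))); by field; rewrite ?pnatr_eq0.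
- apply: (wred (S := (- (x (nn 2)) + (x (nn 2))*w^+2 - (x (nn 2))*w^+3 - (x (nn 2))*w^+4 + (x (nn 1))*w)) (G1 := 0) (G2 := 0) (erefl (0:C)) (erefl (0:C))); by field; rewrite ?pnatr_eq0.
- apply: (wred (S := (- (x (nn 5)) + (x (nn 5))*w + (x (nn 5))*w^+2 - (x (nn 4)) - (x (nn 2)) + (x (nn 2))*w - (x (nn 2))*w^+3 + 2%:R*(x (nn 2))*w^+4 + 3%:R*(x (nn 2))*w^+5 + (x (nn 2))*w^+6 - (x (nn 1)) + (x (nn 1))*w + (x (nn 1))*w^+2)) (G1 := 0) (G2 := 0) (erefl (0:C)) (erefl (0:C))); by field; rewrite ?pnatr_eq0.
Qed.

Lemma trE2 (x : 'I_9 -> C) : (x (nn 0) + x (nn 1) + x (nn 2) + x (nn 3) + x (nn 4) + x (nn 5) + x (nn 6) + x (nn 7) + x (nn 8)) = 0 -> (x (nn 0) ^+ 2 + x (nn 1) ^+ 2 + x (nn 2) ^+ 2 + x (nn 3) ^+ 2 + x (nn 4) ^+ 2 + x (nn 5) ^+ 2 + x (nn 6) ^+ 2 + x (nn 7) ^+ 2 + x (nn 8) ^+ 2) - 1 = 0 -> \tr (Ee x *m Ee x) = 3%:R.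
Proof.
move=> h1 h2; rewrite /mxtrace sum3 !mxE !sum3 !mxE /=.
apply: (wred (S := (- 2%:R*(x (nn 8))^+2 + 4%:R*(x (nn 7))*(x (nn 8)) - 2%:R*(x (nn 7))^+2 - 2%:R*(x (nn 5))^+2 + 4%:R*(x (nn 4))*(x (nn 5)) - 2%:R*(x (nn 4))^+2 - 2%:R*(x (nn 2))^+2 + 4%:R*(x (nn 1))*(x (nn 2)) - 2%:R*(x (nn 1))^+2)) (G1 := (x (nn 0) + x (nn 1) + x (nn 2) + x (nn 3) + x (nn 4) + x (nn 5) + x (nn 6) + x (nn 7) + x (nn 8))) (G2 := 3%:R) h1 h2); ring.
Qed.

Lemma trE3 (x : 'I_9 -> C) : (x (nn 0) + x (nn 1) + x (nn 2) + x (nn 3) + x (nn 4) + x (nn 5) + x (nn 6) + x (nn 7) + x (nn 8)) = 0 -> \tr (Ee x *m Ee x *m Ee x) = 3%:R * (x (nn 0) ^+ 3 + x (nn 1) ^+ 3 + x (nn 2) ^+ 3 + x (nn 3) ^+ 3 + x (nn 4) ^+ 3 + x (nn 5) ^+ 3 + x (nn 6) ^+ 3 + x (nn 7) ^+ 3 + x (nn 8) ^+ 3 - 3%:R * (x (nn 0) * x (nn 1) * x (nn 2) + x (nn 3) * x (nn 4) * x (nn 5) + x (nn 6) * x (nn 7) * x (nn 8) + x (nn 0) * x (nn 3) * x (nn 6) + x (nn 1) * x (nn 4) * x (nn 7) + x (nn 2) * x (nn 5) * x (nn 8) + x (nn 0) * x (nn 4) * x (nn 8) + x (nn 1) * x (nn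 5) * x (nn 6) + x (nn 2) * x (nn 3) * x (nn 7) + x (nn 0) * x (nn 5) * x (nn 7) + x (nn 1) * x (nn 3) * x (nn 8) + x (nn 2) * x (nn 4) * x (nn 6))).
Proof.
move=> h1; rewrite /mxtrace sum3 !mxE !sum3 !mxE !sum3 !mxE /=.
apply: (wred (S := (- 6%:R*(x (nn 8))^+3 + 6%:R*(x (nn 7))*(x (nn 8))^+2 + 6%:R*(x (nn 7))^+2*(x (nn 8)) - 6%:R*(x (nn 7))^+3 - 6%:R*(x (nn 6))*(x (nn 8))^+2 + 12%:R*(x (nn 6))*(x (nn 7))*(x (nn 8)) - 6%:R*(x (nn 6))*(x (nn 7))^+2 - 3%:R*(x (nn 5))*(x (nn 8))^+2 + 6%:R*(x (nn 5))*(x (nn 7))*(x (nn 8)) - 3%:R*(x (nn 5))*(x (nn 7))^+2 - 3%:R*(x (nn 5))^+2*(x (nn 8)) - 3%:R*(x (nn 5))^+2*(x (nn 7)) - 3%:R*(x (nn 5))^+2*(x (nn 6)) - 6%:R*(x (nn 5))^+3 - 3%:R*(x (nn 4))*(x (nn 8))^+2 + 6%:R*(x (nn 4))*(x (nn 7))*(x (nn 8)) - 3%:R*(x (nn 4))*(x (nn 7))^+2 + 6%:R*(x (nn 4))*(x (nn 5))*(x (nn 8)) + 6%:R*(x (nn 4))*(x (nn 5))*(x (nn 7)) + 6%:R*(x (nn 4))*(x (nn 5))*(x (nn 6)) + 6%:R*(x (nn 4))*(x (nn 5))^+2 - 3%:R*(x (nn 4))^+2*(x (nn 8)) - 3%:R*(x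 (nn 4))^+2*(x (nn 7)) - 3%:R*(x (nn 4))^+2*(x (nn 6)) + 6%:R*(x (nn 4))^+2*(x (nn 5)) - 6%:R*(x (nn 4))^+3 - 3%:R*(x (nn 3))*(x (nn 8))^+2 + 6%:R*(x (nn 3))*(x (nn 7))*(x (nn 8)) - 3%:R*(x (nn 3))*(x (nn 7))^+2 - 6%:R*(x (nn 3))*(x (nn 5))^+2 + 12%:R*(x (nn 3))*(x (nn 4))*(x (nn 5)) - 6%:R*(x (nn 3))*(x (nn 4))^+2 - 3%:R*(x (nn 2))*(x (nn 8))^+2 + 6%:R*(x (nn 2))*(x (nn 7))*(x (nn 8)) - 3%:R*(x (nn 2))*(x (nn 7))^+2 + 9%:R*(x (nn 2))*(x (nn 5))*(x (nn 8)) - 3%:R*(x (nn 2))*(x (nn 5))*(x (nn 7)) - 6%:R*(x (nn 2))*(x (nn 5))*(x (nn 6)) - 3%:R*(x (nn 2))*(x (nn 5))^+2 - 3%:R*(x (nn 2))*(x (nn 4))*(x (nn 8)) - 3%:R*(x (nn 2))*(x (nn 4))*(x (nn 7)) + 6%:R*(x (nn 2))*(x (nn 4))*(x (nn 6)) + 6%:R*(x (nn 2))*(x (nn 4))*(x (nn 5)) - 3%:R*(x (nn 2))*(x (nn 4))^+2 - 6%:R*(x (nn 2))*(x (nn 3))*(x (nn 8)) + 6%:R*(x (nn 2))*(x (nn 3))*(x (nn 7)) - 3%:R*(x (nn 2))^+2*(x (nn 8)) - 3%:R*(x (nn 2))^+2*(x (nn 7)) - 3%:R*(x (nn 2))^+2*(x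 (nn 6)) - 3%:R*(x (nn 2))^+2*(x (nn 5)) - 3%:R*(x (nn 2))^+2*(x (nn 4)) - 3%:R*(x (nn 2))^+2*(x (nn 3)) - 6%:R*(x (nn 2))^+3 - 3%:R*(x (nn 1))*(x (nn 8))^+2 + 6%:R*(x (nn 1))*(x (nn 7))*(x (nn 8)) - 3%:R*(x (nn 1))*(x (nn 7))^+2 - 3%:R*(x (nn 1))*(x (nn 5))*(x (nn 8)) - 3%:R*(x (nn 1))*(x (nn 5))*(x (nn 7)) + 6%:R*(x (nn 1))*(x (nn 5))*(x (nn 6)) - 3%:R*(x (nn 1))*(x (nn 5))^+2 - 3%:R*(x (nn 1))*(x (nn 4))*(x (nn 8)) + 9%:R*(x (nn 1))*(x (nn 4))*(x (nn 7)) - 6%:R*(x (nn 1))*(x (nn 4))*(x (nn 6)) + 6%:R*(x (nn 1))*(x (nn 4))*(x (nn 5)) - 3%:R*(x (nn 1))*(x (nn 4))^+2 + 6%:R*(x (nn 1))*(x (nn 3))*(x (nn 8)) - 6%:R*(x (nn 1))*(x (nn 3))*(x (nn 7)) + 6%:R*(x (nn 1))*(x (nn 2))*(x (nn 8)) + 6%:R*(x (nn 1))*(x (nn 2))*(x (nn 7)) + 6%:R*(x (nn 1))*(x (nn 2))*(x (nn 6)) + 6%:R*(x (nn 1))*(x (nn 2))*(x (nn 5)) + 6%:R*(x (nn 1))*(x (nn 2))*(x (nn 4)) + 6%:R*(x (nn 1))*(x (nn 2))*(x (nn 3)) + 6%:R*(x (nn 1))*(x (nn 2))^+2 - 3%:R*(x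 (nn 1))^+2*(x (nn 8)) - 3%:R*(x (nn 1))^+2*(x (nn 7)) - 3%:R*(x (nn 1))^+2*(x (nn 6)) - 3%:R*(x (nn 1))^+2*(x (nn 5)) - 3%:R*(x (nn 1))^+2*(x (nn 4)) - 3%:R*(x (nn 1))^+2*(x (nn 3)) + 6%:R*(x (nn 1))^+2*(x (nn 2)) - 6%:R*(x (nn 1))^+3 - 3%:R*(x (nn 0))*(x (nn 8))^+2 + 6%:R*(x (nn 0))*(x (nn 7))*(x (nn 8)) - 3%:R*(x (nn 0))*(x (nn 7))^+2 - 6%:R*(x (nn 0))*(x (nn 5))*(x (nn 8)) + 6%:R*(x (nn 0))*(x (nn 5))*(x (nn 7)) - 3%:R*(x (nn 0))*(x (nn 5))^+2 + 6%:R*(x (nn 0))*(x (nn 4))*(x (nn 8)) - 6%:R*(x (nn 0))*(x (nn 4))*(x (nn 7)) + 6%:R*(x (nn 0))*(x (nn 4))*(x (nn 5)) - 3%:R*(x (nn 0))*(x (nn 4))^+2 - 6%:R*(x (nn 0))*(x (nn 2))^+2 + 12%:R*(x (nn 0))*(x (nn 1))*(x (nn 2)) - 6%:R*(x (nn 0))*(x (nn 1))^+2)) (G1 := (5%:R*(x (nn 8))^+2 + (x (nn 7))*(x (nn 8)) + 5%:R*(x (nn 7))^+2 + (x (nn 6))*(x (nn 8)) + (x (nn 6))*(x (nn 7)) + 5%:R*(x (nn 6))^+2 + (x (nn 5))*(x (nn 8)) + (x (nn 5))*(x (nn 7)) + (x (nn 5))*(x (nn 6)) + 5%:R*(x (nn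 5))^+2 + (x (nn 4))*(x (nn 8)) + (x (nn 4))*(x (nn 7)) + (x (nn 4))*(x (nn 6)) + (x (nn 4))*(x (nn 5)) + 5%:R*(x (nn 4))^+2 + (x (nn 3))*(x (nn 8)) + (x (nn 3))*(x (nn 7)) + (x (nn 3))*(x (nn 6)) + (x (nn 3))*(x (nn 5)) + (x (nn 3))*(x (nn 4)) + 5%:R*(x (nn 3))^+2 + (x (nn 2))*(x (nn 8)) + (x (nn 2))*(x (nn 7)) + (x (nn 2))*(x (nn 6)) + (x (nn 2))*(x (nn 5)) + (x (nn 2))*(x (nn 4)) + (x (nn 2))*(x (nn 3)) + 5%:R*(x (nn 2))^+2 + (x (nn 1))*(x (nn 8)) + (x (nn 1))*(x (nn 7)) + (x (nn 1))*(x (nn 6)) + (x (nn 1))*(x (nn 5)) + (x (nn 1))*(x (nn 4)) + (x (nn 1))*(x (nn 3)) + (x (nn 1))*(x (nn 2)) + 5%:R*(x (nn 1))^+2 + (x (nn 0))*(x (nn 8)) + (x (nn 0))*(x (nn 7)) + (x (nn 0))*(x (nn 6)) + (x (nn 0))*(x (nn 5)) + (x (nn 0))*(x (nn 4)) + (x (nn 0))*(x (nn 3)) + (x (nn 0))*(x (nn 2)) + (x (nn 0))*(x (nn 1)) + 5%:R*(x (nn 0))^+2)) (G2 := 0) h1 (erefl (0:C))); ring.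
Qed.
End S.

Section R.
Variable C : numClosedFieldType.

Lemma eqby (L R G1 G2 a1 b1 a2 b2 : C) : a1 = b1 -> a2 = b2 ->
  L - R = G1 * (a1 - b1) + G2 * (a2 - b2) -> L = R.
Proof. by move=> -> ->; rewrite !subrr !mulr0 addr0 => /eqP; rewrite subr_eq0 => /eqP. Qed.

Lemma min3 (a b c : C) : a \is Num.real -> b \is Num.real -> c \is Num.real ->
  exists m, [/\ (m = a \/ m = b \/ m = c), m <= a, m <= b & m <= c].
Proof.
move=> ra rb rc.
case/orP: (real_leVge ra rb) => hab.
  case/orP: (real_leVge ra rc) => hac.
    by exists a; split => //; left.
  by exists c; split => //; [right; right| exact: le_trans hab].
case/orP: (real_leVge rb rc) => hbc.
  by exists b; split => //; right; left.
by exists c; split => //; [right; right| exact: le_trans hbc hab].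
Qed.

Lemma sq2 : sqrtC (2%:R : C) ^+ 2 = 2%:R. Proof. by rewrite sqrtCK. Qed.
Lemma s2gt0 : 0 < sqrtC (2%:R : C). Proof. by rewrite sqrtC_gt0 ltr0n. Qed.

Lemma real_part (d0 d1 d2 F : C) :
  d0 \is Num.real -> d1 \is Num.real -> d2 \is Num.real ->
  d0 + d1 + d2 = 0 -> d0 ^+ 2 + d1 ^+ 2 + d2 ^+ 2 = 3%:R / 4%:R ->
  d0 ^+ 3 + d1 ^+ 3 + d2 ^+ 3 = 3%:R / 8%:R * F ->
  let f := fun r : C => 4%:R * r ^+ 3 * F - r ^+ 2 + 54%:R^-1 in
  exists R : C,
    [/\ R \is Num.real, 0 < R, f R = 0 &
        forall x : C, x \is Num.real -> 0 < x -> f x = 0 -> R <= x] /\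
    (forall r : C, r \is Num.real -> 0 <= r ->
       ([/\ 0 <= 3%:R^-1 + 4%:R * r * d0, 0 <= 3%:R^-1 + 4%:R * r * d1
          & 0 <= 3%:R^-1 + 4%:R * r * d2] <-> r <= R)) /\
    (F = 0 -> R = (3%:R * sqrtC 6%:R)^-1) /\
    (F = (sqrtC 2%:R)^-1 -> R = (3%:R * sqrtC 2%:R)^-1) /\
    (F = - (sqrtC 2%:R)^-1 -> R = (6%:R * sqrtC 2%:R)^-1) /\
    ((6%:R * sqrtC 2%:R)^-1 <= R <= (3%:R * sqrtC 2%:R)^-1).
Proof.
move=> r0 r1 r2 h1 h2 h3 f.
have hprod : forall r, 2%:R * f r = (3%:R^-1 + 4%:R * r * d0) *
    (3%:R^-1 + 4%:R * r * d1) * (3%:R^-1 + 4%:R * r * d2).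
  move=> r; rewrite /f.
  have hd2 : d2 = - (d0 + d1) by rewrite -[RHS]add0r -h1; ring.
  rewrite hd2 in h2 h3 *.
  apply: (eqby (G1 := 8%:R/3%:R * r^+2) (G2 := - (64%:R / 3%:R) * r^+3) h2 h3).
  by field.
have [m [hm hm0 hm1 hm2]] := min3 r0 r1 r2.
have rm : m \is Num.real by case: hm => [->|[->|->]].
have hle : m *+ 3 <= 0.
  have -> : m *+ 3 = m + m + m by ring.
  by rewrite -h1; apply: lerD; first apply: lerD.
have hmle0 : m <= 0 by rewrite -(pmulrn_lle0 _ (isT : (0 < 3)%N)).
have hsq : 3%:R / 4%:R <= 6%:R * m ^+ 2.
  have : (d0 - m) * (d0 + (m + m)) + (d1 - m) * (d1 + (m + m)) + (d2 - m) * (d2 + (m + m)) <= 0.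
    rewrite -[0 in X in _ <= X](addr0 0) -[0 in X in _ <= X + _](addr0 0).
    apply: lerD; first apply: lerD.
    - apply: mulr_ge0_le0; first by rewrite subr_ge0.
      by rewrite -h1 -addrA lerD // lerD.
    - apply: mulr_ge0_le0; first by rewrite subr_ge0.
      rewrite -h1 -addrA [d0 + _]addrC -addrA lerD // lerD //.
    - apply: mulr_ge0_le0; first by rewrite subr_ge0.
      by rewrite -h1 [d0 + _ + _]addrC lerD // lerD.
  have -> : (d0 - m) * (d0 + (m + m)) + (d1 - m) * (d1 + (m + m)) + (d2 - m) * (d2 + (m + m))
     = 3%:R / 4%:R - 6%:R * m ^+ 2.
    by apply: (eqby (G1 := 1) (G2 := m) h2 h1); field.
  by rewrite subr_le0.
have hsq2 : 3%:R * m ^+ 2 <= 3%:R / 2%:R.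
  rewrite -subr_ge0.
  case: hm => [->|[->|->]].
  - have -> : 3%:R / 2%:R - 3%:R * d0 ^+ 2 = (d1 - d2) ^+ 2.
      by apply: (eqby (G1 := -2%:R) (G2 := d1 + d2 - d0) h2 h1); field.
    by apply: real_exprn_even_ge0; rewrite ?rpredB.
  - have -> : 3%:R / 2%:R - 3%:R * d1 ^+ 2 = (d0 - d2) ^+ 2.
      by apply: (eqby (G1 := -2%:R) (G2 := d0 + d2 - d1) h2 h1); field.
    by apply: real_exprn_even_ge0; rewrite ?rpredB.
  - have -> : 3%:R / 2%:R - 3%:R * d2 ^+ 2 = (d0 - d1) ^+ 2.
      by apply: (eqby (G1 := -2%:R) (G2 := d0 + d1 - d2) h2 h1); field.
    by apply: real_exprn_even_ge0; rewrite ?rpredB.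
have mneq : m != 0.
  apply/eqP => m0; move: hsq; rewrite m0 expr0n /= mulr0.
  by rewrite lt_geF // divr_gt0 // ltr0n.
have mlt0 : m < 0 by rewrite lt_neqAle mneq hmle0.
set a := - m.
have ha : 0 < a by rewrite /a oppr_gt0.
have ha0 : a != 0 by rewrite lt0r_neq0.
have hma : m = - a by rewrite /a opprK.
have h12 : 0 < 12%:R * a by rewrite mulr_gt0 // ltr0n.
set R := (12%:R * a)^-1.
have hR0 : 0 < R by rewrite invr_gt0.
have hRr : R \is Num.real by rewrite gtr0_real.
have hlin : forall r, 3%:R^-1 + 4%:R * r * m = (1 - 12%:R * a * r) / 3%:R.
  by move=> r; rewrite hma; field.
have hRm : 3%:R^-1 + 4%:R * R * m = 0.
  by rewrite hlin /R; field; rewrite ha0.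
have hfR : f R = 0.
  have : 2%:R * f R = 0.
    by rewrite hprod; case: hm => [<-|[<-|<-]]; rewrite hRm ?mulr0 ?mul0r.
  by move/eqP; rewrite mulf_eq0 pnatr_eq0 /= => /eqP.
have hleR : forall x, 0 < x -> (x <= R) = (12%:R * a * x <= 1).
  by move=> x hx; rewrite /R -[(_)^-1]mulr1 ler_pdivlMl.
have hgeR : forall x, 0 <= x -> (R <= x) = (1 <= 12%:R * a * x).
  by move=> x hx; rewrite /R -[(_)^-1]mulr1 ler_pdivrMl.
exists R; split.
  split => // x rx hx fx.
  rewrite hgeR; last exact: ltW.
  have : 3%:R^-1 + 4%:R * x * m <= 0.
    move/eqP: (hprod x); rewrite fx mulr0 eq_sym !mulf_eq0 -orbA.
    have hx4 : 0 <= 4%:R * x by rewrite mulr_ge0 // ltW.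
    case/or3P => /eqP hk.
    - by rewrite -hk lerD2l ler_wpM2l.
    - by rewrite -hk lerD2l ler_wpM2l.
    - by rewrite -hk lerD2l ler_wpM2l.
  by rewrite hlin pmulr_lle0 ?invr_gt0 ?ltr0n // subr_le0.
split.
  move=> r rr hr; split.
    case=> g0 g1 g2.
    have : 0 <= 3%:R^-1 + 4%:R * r * m by case: hm => [->|[->|->]].
    rewrite hlin pmulr_lge0 ?invr_gt0 ?ltr0n // subr_ge0 => hh.
    have [r0'|rpos] := eqVneq r 0; first by rewrite r0' ltW.
    by rewrite hleR // lt0r rpos hr.
  move=> hrR.
  have hbase : 0 <= 3%:R^-1 + 4%:R * r * m.
    rewrite hlin pmulr_lge0 ?invr_gt0 ?ltr0n // subr_ge0.
    have [r0'|rpos] := eqVneq r 0; first by rewrite r0' mulr0 ler01.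
    by rewrite -hleR // lt0r rpos hr.
  have hr4 : 0 <= 4%:R * r by rewrite mulr_ge0.
  have hk : forall dk, m <= dk -> 0 <= 3%:R^-1 + 4%:R * r * dk.
    by move=> dk hdk; apply: (le_trans hbase); rewrite lerD2l ler_wpM2l.
  by split; apply: hk.
set s := sqrtC (2%:R : C).
have s0 : 0 < s := s2gt0.
have sn0 : s != 0 by rewrite lt0r_neq0.
have hs2 : s ^+ 2 = 2%:R := sq2.
have hsi : s^-1 = s / 2%:R.
  by apply: (eqby (G1 := - (2%:R * s)^-1) (G2 := 0) hs2 (erefl (0:C))); field; exact: sn0.
have ha2 : a ^+ 2 = m ^+ 2 by rewrite /a sqrrN.
have hs6 : 0 < 6%:R * s by rewrite mulr_gt0 // ltr0n.
have hs3 : 0 < 3%:R * s by rewrite mulr_gt0 // ltr0n.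
split; last split; last split.
- move=> F0; move: hfR; rewrite /f F0 mulr0 add0r => hR2.
  set t := (3%:R * sqrtC 6%:R)^-1.
  have ht0 : 0 < t by rewrite invr_gt0 mulr_gt0 // ?ltr0n // sqrtC_gt0 ltr0n.
  have ht : t ^+ 2 = 54%:R^-1 by rewrite exprVn exprMn sqrtCK -natrX -natrM.
  have : (R - t) * (R + t) = 0.
    by apply: (eqby (G1 := -1) (G2 := -1) hR2 ht); ring.
  move/eqP; rewrite mulf_eq0 (negbTE (lt0r_neq0 (addr_gt0 hR0 ht0))) orbF subr_eq0.
  by move/eqP.
- move=> Fs; move: hfR; rewrite /f Fs hsi => hR.
  have : 2%:R * s * (R - s / 6%:R) ^+ 2 * (R + s / 12%:R) = 0.
    rewrite -hR; symmetry.
    by apply: (eqby (G1 := R ^+ 2 / 2%:R - (s ^+ 2 + 2%:R) / 216%:R) (G2 := 0) hs2 (erefl (0:C))); field.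
  move/eqP; rewrite !mulf_eq0 pnatr_eq0 /= (negbTE sn0) /=.
  have : R + s / 12%:R != 0 by rewrite lt0r_neq0 // addr_gt0 // divr_gt0 // ltr0n.
  move/negbTE => ->; rewrite orbF orbb subr_eq0 => /eqP ->.
  by apply: (eqby (G1 := (6%:R * s)^-1) (G2 := 0) hs2 (erefl (0:C))); field; exact: sn0.
- move=> Fs; move: hfR; rewrite /f Fs hsi => hR.
  have : - (2%:R * s) * (R - s / 12%:R) * (R + s / 6%:R) ^+ 2 = 0.
    rewrite -hR; symmetry.
    by apply: (eqby (G1 := R ^+ 2 / 2%:R - (s ^+ 2 + 2%:R) / 216%:R) (G2 := 0) hs2 (erefl (0:C))); field.
  move/eqP; rewrite !mulf_eq0 oppr_eq0 mulf_eq0 pnatr_eq0 /= (negbTE sn0) /=.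
  have : R + s / 6%:R != 0 by rewrite lt0r_neq0 // addr_gt0 // divr_gt0 // ltr0n.
  move/negbTE => ->; rewrite !orbF subr_eq0 => /eqP ->.
  by apply: (eqby (G1 := (12%:R * s)^-1) (G2 := 0) hs2 (erefl (0:C))); field; exact: sn0.
apply/andP; split.
- rewrite /R lef_pV2 ?posrE // -ler_sqr ?nnegrE ?(ltW h12) ?(ltW hs6) ?(ltW hs3) //.
  rewrite (_ : (12%:R * a) ^+ 2 = 48%:R * (3%:R * m ^+ 2)); last by rewrite exprMn ha2 -natrX; ring.
  rewrite (_ : (6%:R * s) ^+ 2 = 48%:R * (3%:R / 2%:R)); last by rewrite exprMn hs2; field.
  by rewrite ler_pM2l ?ltr0n.
- rewrite /R lef_pV2 ?posrE // -ler_sqr ?nnegrE ?(ltW h12) ?(ltW hs6) ?(ltW hs3) //.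
  rewrite (_ : (12%:R * a) ^+ 2 = 24%:R * (6%:R * m ^+ 2)); last by rewrite exprMn ha2 -natrX; ring.
  rewrite (_ : (3%:R * s) ^+ 2 = 24%:R * (3%:R / 4%:R)); last by rewrite exprMn hs2; field.
  by rewrite ler_pM2l ?ltr0n.
Qed.
End R.

Local Notation "'nn' k" := (@Ordinal 9 k isT) (at level 0, k at level 0).
Local Notation "'o3' k" := (@Ordinal 3 k isT) (at level 0, k at level 0).

Section M.
Variable C : numClosedFieldType.

Lemma Nm_const (c : C) : Nm (fun _ => c) = (3%:R * c) *: 1%:M.
Proof.
have := NmE (fun _ : 'I_9 => c) => h.
have -> : Nm (fun _ => c) = 2%:R^-1 *: ((2%:R : C) *: Nm (fun _ => c)).
  by rewrite scalerA mulVf ?scale1r // pnatr_eq0.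
rewrite h; apply/matrixP => a b; rewrite !mxE.
by case: a => [[|[|[|a]]] Ha] //; case: b => [[|[|[|b]]] Hb] //=; field.
Qed.

Lemma herm_entry (x : 'I_9 -> C) (hr : forall i, x i \is Num.real) a b :
  (Nm x b a)^* = Nm x a b.
Proof.
rewrite /Nm !summxE rmorph_sum; apply: eq_bigr => k _.
rewrite ![(_ *: Pi C _) _ _]mxE !Pi_entry rmorphM /= (CrealP (hr k)) fmorph_div /= rmorphM /= conjCK conjC_nat.
by rewrite [_^* * Wv C k a]mulrC.
Qed.

Lemma conj_tr (Q P M : 'M[C]_3) : P *m Q = 1%:M -> \tr (Q *m M *m P) = \tr M.
Proof. by move=> h; rewrite mxtrace_mulC mulmxA h mul1mx. Qed.

Lemma conj_mul (Q P A B : 'M[C]_3) : P *m Q = 1%:M ->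
  (Q *m A *m P) *m (Q *m B *m P) = Q *m (A *m B) *m P.
Proof. by move=> h; rewrite !mulmxA -[Q *m A *m P *m Q]mulmxA h mulmx1. Qed.

Lemma sum3C (f : 'I_3 -> C) : \sum_i f i = f (o3 0) + f (o3 1) + f (o3 2).
Proof. exact: sum3. Qed.

Lemma tr_diag (dd : 'rV[C]_3) : \tr (diag_mx dd) = dd 0 (o3 0) + dd 0 (o3 1) + dd 0 (o3 2).
Proof. by rewrite mxtrace_diag sum3. Qed.

Lemma tr_diag2 (dd : 'rV[C]_3) : \tr (diag_mx dd *m diag_mx dd) =
  dd 0 (o3 0) ^+ 2 + dd 0 (o3 1) ^+ 2 + dd 0 (o3 2) ^+ 2.
Proof. by rewrite /mxtrace !sum3 !mxE !sum3 !mxE /=; ring. Qed.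

Lemma tr_diag3 (dd : 'rV[C]_3) : \tr (diag_mx dd *m diag_mx dd *m diag_mx dd) =
  dd 0 (o3 0) ^+ 3 + dd 0 (o3 1) ^+ 3 + dd 0 (o3 2) ^+ 3.
Proof. by rewrite /mxtrace !sum3 !mxE !sum3 !mxE !sum3 !mxE /=; ring. Qed.

Lemma qform (u : 'cV[C]_3) (dd : 'rV[C]_3) (r : C) :
  (ctr u *m (3%:R^-1 *: 1%:M + (4%:R * r) *: diag_mx dd) *m u) 0 0 =
  (3%:R^-1 + 4%:R * r * dd 0 (o3 0)) * (u (o3 0) 0 * (u (o3 0) 0)^*) +
  (3%:R^-1 + 4%:R * r * dd 0 (o3 1)) * (u (o3 1) 0 * (u (o3 1) 0)^*) +
  (3%:R^-1 + 4%:R * r * dd 0 (o3 2)) * (u (o3 2) 0 * (u (o3 2) 0)^*).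
Proof. by rewrite !mxE !sum3 !mxE !sum3 !mxE /=; ring. Qed.


Lemma ctr_mul m k p (A : 'M[C]_(m, k)) (B : 'M[C]_(k, p)) : ctr (A *m B) = ctr B *m ctr A.
Proof. by rewrite /ctr trmx_mul map_mxM. Qed.

Lemma ctrK m k (A : 'M[C]_(m, k)) : ctr (ctr A) = A.
Proof. by apply/matrixP => i j; rewrite !mxE conjCK. Qed.

End M.

Theorem mainTheorem9 (C : numClosedFieldType) (n : 'I_9 -> C)
    (hreal : forall i, n i \is Num.real)
    (hsum : \sum_i n i = 0)
    (hnorm : \sum_i n i ^+ 2 = 1) :
  let f := fun r : C => 4%:R * r ^+ 3 * Fcub n - r ^+ 2 + 54%:R^-1 in
  exists R : C,
    [/\ R \is Num.real, 0 < R, f R = 0 &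
        forall x : C, x \is Num.real -> 0 < x -> f x = 0 -> R <= x] /\
    (forall r : C, r \is Num.real -> 0 <= r -> (density (rho n r) <-> r <= R)) /\
    (Fcub n = 0 -> R = (3%:R * sqrtC 6%:R)^-1) /\
    (Fcub n = (sqrtC 2%:R)^-1 -> R = (3%:R * sqrtC 2%:R)^-1) /\
    (Fcub n = - (sqrtC 2%:R)^-1 -> R = (6%:R * sqrtC 2%:R)^-1) /\
    ((6%:R * sqrtC 2%:R)^-1 <= R <= (3%:R * sqrtC 2%:R)^-1).
Proof.
move=> f.
set N := Nm n.
have hNE : N = 2%:R^-1 *: Ee n.
  by rewrite -NmE scalerA mulVf ?scale1r // pnatr_eq0.
have hs1 := hsum; rewrite sum9 in hs1.
have hs2 : \sum_i n i ^+ 2 - 1 = 0 by rewrite hnorm subrr.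
rewrite sum9 in hs2.
have trN : \tr N = 0.
  rewrite hNE mxtraceZ /mxtrace sum3 !mxE /=.
  by apply: (eqby (G1 := 1) (G2 := 0) hs1 (erefl (0:C))); field.
have trN2 : \tr (N *m N) = 3%:R / 4%:R.
  rewrite hNE -scalemxAl -scalemxAr scalerA mxtraceZ trE2 //.
  by field.
have trN3 : \tr (N *m N *m N) = 3%:R / 8%:R * Fcub n.
  rewrite hNE -!scalemxAl -!scalemxAr !scalerA -scalemxAl scalerA mxtraceZ trE3 // FcubE sum9.
  by field.
have hH : N \is hermsymmx.
  apply/is_hermitianmxP; rewrite expr0 scale1r; apply/matrixP => a b; rewrite !mxE.
  by rewrite /N herm_entry.
have hNP : N = invmx (spectralmx N) *m diag_mx (spectral_diag N) *m spectralmx N.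
  by apply/orthomx_spectralP; exact: hermitian_normalmx.
move: hNP.
set P := spectralmx N; set dd := spectral_diag N => hNP.
have hPu : P \is unitarymx := spectral_unitarymx N.
have hPunit : P \in unitmx := spectral_unit N.
move: hNP; set Q := invmx P => hNP.
have hPQ : P *m Q = 1%:M := mulmxV hPunit.
have hQP : Q *m P = 1%:M := mulVmx hPunit.
have hQ : Q = ctr P := invmx_unitary hPu.
have hdr := hermitian_spectral_diag_real hH.
have rd : forall k, dd 0 k \is Num.real by move=> k; apply: (mxOverP hdr).
have p1 : dd 0 (o3 0) + dd 0 (o3 1) + dd 0 (o3 2) = 0 by rewrite -tr_diag -trN hNP conj_tr.
have p2 : dd 0 (o3 0) ^+ 2 + dd 0 (o3 1) ^+ 2 + dd 0 (o3 2) ^+ 2 = 3%:R / 4%:R.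
  by rewrite -tr_diag2 -trN2 hNP conj_mul // conj_tr.
have p3 : dd 0 (o3 0) ^+ 3 + dd 0 (o3 1) ^+ 3 + dd 0 (o3 2) ^+ 3 = 3%:R / 8%:R * Fcub n.
  by rewrite -tr_diag3 -trN3 hNP (conj_mul _ _ hPQ) (conj_mul _ _ hPQ) (conj_tr _ hPQ).
have [R [HR1 [HR2 [HR3 [HR4 [HR5 HR6]]]]]] := real_part (rd _) (rd _) (rd _) p1 p2 p3.
exists R; split; first exact: HR1.
split; last by [].
move=> r rr r0; rewrite -(HR2 r rr r0).
have hrho : rho n r = 3%:R^-1 *: 1%:M + (4%:R * r) *: N.
  rewrite /rho (eq_bigr (fun i => 9%:R^-1 *: Pi C i + (4%:R * r) *: (n i *: Pi C i))); last first.
    by move=> i _; rewrite /prob scalerA -scalerDl; congr (_ *: _); field.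
  rewrite big_split /=.
  rewrite (_ : \sum_i 9%:R^-1 *: Pi C i = Nm (fun _ => 9%:R^-1)) // Nm_const -scaler_sumr.
  by congr (_ *: _ + _); field.
have hrho2 : rho n r = Q *m (3%:R^-1 *: 1%:M + (4%:R * r) *: diag_mx dd) *m P.
  rewrite hrho hNP mulmxDr mulmxDl -!scalemxAr -!scalemxAl mulmx1 hQP.
  by [].
have hq : forall v : 'cV[C]_3, ctr v *m rho n r *m v =
    ctr (P *m v) *m (3%:R^-1 *: 1%:M + (4%:R * r) *: diag_mx dd) *m (P *m v).
  by move=> v; rewrite hrho2 ctr_mul -hQ !mulmxA.
split.
- case=> _ _ hpsd.
  have hk : forall w : 'cV[C]_3,
      0 <= (ctr w *m (3%:R^-1 *: 1%:M + (4%:R * r) *: diag_mx dd) *m w) 0 0.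
    by move=> w; have := hpsd (Q *m w); rewrite hq [P *m (Q *m w)]mulmxA hPQ mul1mx.
  split.
  + have := hk (\col_i ((i == o3 0)%:R)); rewrite qform !mxE /= ?rmorph1 ?rmorph0.
    by rewrite !(mul0r, mulr0, mul1r, mulr1, addr0, add0r).
  + have := hk (\col_i ((i == o3 1)%:R)); rewrite qform !mxE /= ?rmorph1 ?rmorph0.
    by rewrite !(mul0r, mulr0, mul1r, mulr1, addr0, add0r).
  + have := hk (\col_i ((i == o3 2)%:R)); rewrite qform !mxE /= ?rmorph1 ?rmorph0.
    by rewrite !(mul0r, mulr0, mul1r, mulr1, addr0, add0r).
- case=> e0 e1 e2; split.
  + apply/matrixP => a b; rewrite hrho !mxE.
    rewrite rmorphD /= !rmorphM /= herm_entry // (CrealP rr) fmorphV /= !conjC_nat.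
    by rewrite eq_sym.
  + rewrite hrho mxtraceD !mxtraceZ trN mxtrace1 mulr0 addr0.
    by field.
  + move=> v; rewrite hq qform.
    by apply: addr_ge0; first apply: addr_ge0; apply: mulr_ge0 => //; exact: mul_conjC_ge0.
Qed.
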